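(* Consider the problem $\min_{x\in\mathbb{R}^n} F(x):=f(x)+g(x)$ subject to $Ax=b$, under the setting described in the context, and let $\lambda^*$ be an optimal solution of $\max_{\lambda\in\mathbb{R}^m} d(\lambda)$. Let $\{x^k\}$ and $\{\lambda^k\}$ be generated by the IAL framework described in the context, with a nonnegative tolerance sequence $\{\eta_k\}$ satisfying $\sum_{k=1}^{+\infty}\eta_k<+\infty$. Then $$\delta_k:=d(\lambda^* )-d(\lambda^k)\to 0 \quad\text{and}\quad \|Ax^{k+1}-b\|\to 0 \quad (k\to\infty).$$
   Context: Let $A\in\mathbb{R}^{m\times n}$ and $b\in\mathbb{R}^m$. Let $f:\mathbb{R}^n\to\mathbb{R}$ be convex and differentiable with Lipschitz continuous gradient. Let $g:\mathbb{R}^n\to\mathbb{R}\cup\{+\infty\}$ be a closed proper convex (possibly nonsmooth) function with bounded domain. Fix a penalty parameter $\beta>0$. For $\lambda\in\mathbb{R}^m$, define $$\hat f_\beta(x;\lambda):=f(x)+\langle\lambda,Ax-b\rangle+\tfrac{\beta}{2}\|Ax-b\|^2,\qquad \mathcal{L}_\beta(x;\lambda):=\hat f_\beta(x;\lambda)+g(x),$$ and $d(\lambda):=\min_{x\in\mathbb{R}^n}\mathcal{L}_\beta(x;\lambda)$. Here $\nabla\hat f_\beta(x;\lambda)$ denotes the gradient of $\hat f_\beta$ with respect to $x$. IAL framework: choose $x^1\in\operatorname{dom} g$, $\lambda^1\in\mathbb{R}^m$, and a nonnegative sequence $\{\eta_k\}$. For $k=1,2,\dots$: find a point $x^{k+1}$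 such that $$\max_{x\in\mathbb{R}^n}\Big\{\langle\nabla\hat f_\beta(x^{k+1};\lambda^k),\,x^{k+1}-x\rangle+g(x^{k+1})-g(x)\Big\}\le\eta_k,$$ and then set $\lambda^{k+1}=\lambda^k+\beta(Ax^{k+1}-b)$. The result holds for any sequences produced in this way. *)

(* Defs.v *)
From HB Require Import structures.
From mathcomp Require Import all_boot all_order all_algebra.
From mathcomp Require Import all_classical all_reals all_analysis.
Set Implicit Arguments. Unset Strict Implicit. Unset Printing Implicit Defensive.
Import Order.TTheory GRing.Theory Num.Theory.
Import numFieldNormedType.Exports.
Local Open Scope classical_set_scope.
Local Open Scope ring_scope.

Section Defs.
Variable R : realType.

Definition dotv (n : nat) (u v : 'cV[R]_n) : R := \sum_(i < n) u i 0 * v i 0.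
Definition enorm (n : nat) (v : 'cV[R]_n) : R := Num.sqrt (dotv v v).

Definition is_gradient (n : nat) (h : 'cV[R]_n -> R) (G : 'cV[R]_n -> 'cV[R]_n) :=
  forall x, differentiable h x /\ forall v, ('d h x : 'cV[R]_n -> R) v = dotv (G x) v.

Definition lipschitz_map (n : nat) (G : 'cV[R]_n -> 'cV[R]_n) :=
  exists Lc : R, forall x y, enorm (G x - G y) <= Lc * enorm (x - y).

Definition convex_fun (n : nat) (f : 'cV[R]_n -> R) :=
  forall (x y : 'cV[R]_n) (t : R), 0 <= t <= 1 ->
    f (t *: x + (1 - t) *: y) <= t * f x + (1 - t) * f y.

(* extended-valued convexity (g never takes -oo here) *)
Definition convex_efun (n : nat) (g : 'cV[R]_n -> \bar R) :=
  forall (x y : 'cV[R]_n) (t : R), 0 <= t <= 1 ->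
    (g (t *: x + (1 - t) *: y)%R <= t%:E * g x + (1 - t)%:E * g y)%E.

Definition proper_efun (n : nat) (g : 'cV[R]_n -> \bar R) :=
  (forall x, g x != -oo%E) /\ exists x, (g x < +oo)%E.

(* closed = lower semicontinuous *)
Definition lsc_efun (n : nat) (g : 'cV[R]_n -> \bar R) :=
  forall x (a : R), (a%:E < g x)%E -> \forall y \near x, (a%:E < g y)%E.

Definition bounded_dom (n : nat) (g : 'cV[R]_n -> \bar R) :=
  exists M : R, forall x, (g x < +oo)%E -> enorm x <= M.

Definition hatf (m n : nat) (f : 'cV[R]_n -> R) (A : 'M[R]_(m, n)) (b : 'cV[R]_m)
  (beta : R) (lam : 'cV[R]_m) (x : 'cV[R]_n) : R :=
  f x + dotv lam (A *m x - b) + beta / 2 * enorm (A *m x - b) ^+ 2.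

Definition augL (m n : nat) (f : 'cV[R]_n -> R) (g : 'cV[R]_n -> \bar R)
  (A : 'M[R]_(m, n)) (b : 'cV[R]_m) (beta : R) (lam : 'cV[R]_m) (x : 'cV[R]_n)
  : \bar R := ((hatf f A b beta lam x)%:E + g x)%E.

(* d(lam) = min_x L_beta(x; lam), written as the infimum (attained under the
   standing assumptions). *)
Definition dualf (m n : nat) (f : 'cV[R]_n -> R) (g : 'cV[R]_n -> \bar R)
  (A : 'M[R]_(m, n)) (b : 'cV[R]_m) (beta : R) (lam : 'cV[R]_m) : \bar R :=
  ereal_inf [set augL f g A b beta lam x | x in [set: 'cV[R]_n]].
End Defs.

(* Main.v *)
Require Import Defs.
From HB Require Import structures.
From mathcomp Require Import all_boot all_order all_algebra.
From mathcomp Require Import all_classical all_reals all_analysis.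
From mathcomp Require Import ring lra.
Import Order.TTheory GRing.Theory Num.Theory.
Import numFieldNormedType.Exports.
Local Open Scope classical_set_scope.
Local Open Scope ring_scope.
Lemma dotvC {R : realType} {k : nat} (u v : 'cV[R]_k) : dotv u v = dotv v u.
Proof. by rewrite /dotv; apply: eq_bigr => i _; rewrite mulrC. Qed.
Lemma dotvDl {R : realType} {k : nat} (u w v : 'cV[R]_k) : dotv (u + w) v = dotv u v + dotv w v.
Proof. by rewrite /dotv -big_split; apply: eq_bigr => i _; rewrite !mxE mulrDl. Qed.
Lemma dotvZl {R : realType} {k : nat} (a : R) (u v : 'cV[R]_k) : dotv (a *: u) v = a * dotv u v.
Proof. by rewrite /dotv mulr_sumr; apply: eq_bigr => i _; rewrite !mxE mulrA. Qed.
Lemma dotvNl {R : realType} {k : nat} (u v : 'cV[R]_k) : dotv (- u) v = - dotv u v.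
Proof. by rewrite -scaleN1r dotvZl mulN1r. Qed.
Lemma dotvBl {R : realType} {k : nat} (u w v : 'cV[R]_k) : dotv (u - w) v = dotv u v - dotv w v.
Proof. by rewrite dotvDl dotvNl. Qed.
Lemma dotvDr {R : realType} {k : nat} (u w v : 'cV[R]_k) : dotv v (u + w) = dotv v u + dotv v w.
Proof. by rewrite !(dotvC v) dotvDl. Qed.
Lemma dotvZr {R : realType} {k : nat} (a : R) (u v : 'cV[R]_k) : dotv v (a *: u) = a * dotv v u.
Proof. by rewrite !(dotvC v) dotvZl. Qed.
Lemma dotvNr {R : realType} {k : nat} (u v : 'cV[R]_k) : dotv v (- u) = - dotv v u.
Proof. by rewrite !(dotvC v) dotvNl. Qed.
Lemma dotvBr {R : realType} {k : nat} (u w v : 'cV[R]_k) : dotv v (u - w) = dotv v u - dotv v w.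
Proof. by rewrite !(dotvC v) dotvBl. Qed.
Lemma dotv_ge0 {R : realType} {k : nat} (u : 'cV[R]_k) : 0 <= dotv u u.
Proof. by apply: sumr_ge0 => i _; rewrite -expr2 sqr_ge0. Qed.
Lemma enorm2 {R : realType} {k : nat} (u : 'cV[R]_k) : enorm u ^+ 2 = dotv u u.
Proof. by rewrite /enorm sqr_sqrtr // dotv_ge0. Qed.
Lemma enorm_ge0 {R : realType} {k : nat} (u : 'cV[R]_k) : 0 <= enorm u.
Proof. by rewrite /enorm sqrtr_ge0. Qed.
Lemma young {R : realType} {k : nat} (beta : R) (w u : 'cV[R]_k) : 0 < beta ->
  - (dotv w w / (2 * beta)) <= dotv w u + beta / 2 * dotv u u.
Proof.
move=> b0.
have h := dotv_ge0 (beta *: u + w).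
rewrite !(dotvDl, dotvDr, dotvZl, dotvZr) (dotvC u w) in h.
have -> : dotv w u + beta / 2 * dotv u u = (beta * (beta * dotv u u) + 2 * beta * dotv w u) / (2 * beta).
  by field; lra.
rewrite -mulNr ler_pM2r; last by rewrite invr_gt0; lra.
lra.
Qed.
Lemma deriv_bound {R : realType} {k : nat} (h : 'cV[R]_k -> R) (G : 'cV[R]_k) x v (B c : R) :
  differentiable h x -> ('d h x : 'cV[R]_k -> R) v = dotv G v ->
  (forall t, 0 < t < 1 -> h (x + t *: v) <= h x + t * B - t * (1 - t) * c) ->
  dotv G v <= B - c.
Proof.
move=> hd hG hb.
have hq : (fun t : R => t^-1 *: ((h \o shift x) (t *: v) - h x)) @ 0^' --> 'D_v h x.
  by have := @diff_derivable _ _ _ h x v hd.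
rewrite -hG -deriveE //.
have sub : (0:R)^'+ --> (0:R)^'.
  move=> P [e e0 HP]; exists e => // y hy y0; apply: HP => //; by rewrite gt_eqF.
have hq' := cvg_trans (cvg_app _ sub) hq.
have hc : (fun t : R => t * c) @ 0^'+ --> 0 * c.
  apply: cvgMl; apply: cvg_at_right_filter; exact: cvg_id.
have := cvgB hq' hc; rewrite mul0r subr0 => hl.
apply: (cvgr_to_le (hl _)).
near=> t.
have t0 : 0 < t by near: t; exact: nbhs_right_gt.
have t1 : t < 1 by near: t; apply: nbhs_right_lt; exact: ltr01.
have := hb t; rewrite t0 t1 /= => /(_ isT) ht.
change (t^-1 * (h (t *: v + x) - h x) - t * c <= B - c).
rewrite [t *: v + x]addrC.
have : t^-1 * (h (x + t *: v) - h x) <= B - (1 - t) * c.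
  rewrite mulrC ler_pdivrMr //; nra.
lra.
Unshelve. all: by end_near.
Qed.
Lemma hatf_seg {R : realType} {m n : nat} (f : 'cV[R]_n -> R) (A : 'M[R]_(m, n)) b beta lam
  (x0 z : 'cV[R]_n) (t : R) : convex_fun f -> 0 < t < 1 ->
  hatf f A b beta lam (x0 + t *: (z - x0)) <=
  hatf f A b beta lam x0 + t * (hatf f A b beta lam z - hatf f A b beta lam x0)
   - t * (1 - t) * (beta / 2 * dotv (A *m (z - x0)) (A *m (z - x0))).
Proof.
move=> cf /andP[t0 t1].
set v := z - x0; set w := A *m x0 - b; set u := A *m v.
have ez : z = x0 + v by rewrite /v addrC subrK.
have e1 : A *m (x0 + t *: v) - b = w + t *: u by rewrite mulmxDr scalemxAr /w /u addrAC.
have e2 : A *m z - b = w + u by rewrite ez mulmxDr /w /u addrAC.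
have ef : f (x0 + t *: v) <= t * f z + (1 - t) * f x0.
  have -> : x0 + t *: v = t *: z + (1 - t) *: x0.
    by rewrite /v; apply/matrixP => i j; rewrite !mxE; ring.
  by apply: cf; rewrite ltW // ltW.
rewrite /hatf !enorm2 e1 e2 -/w.
rewrite !(dotvDl, dotvDr, dotvZl, dotvZr) ?(dotvC u w).
nra.
Qed.
Lemma step_real {R : realType} {m n : nat} (f : 'cV[R]_n -> R) (A : 'M[R]_(m, n)) b beta lam mu
  (G : 'cV[R]_n -> 'cV[R]_n) (xp z : 'cV[R]_n) (gp gz e : R) :
  convex_fun f -> 0 < beta -> is_gradient (hatf f A b beta lam) G ->
  dotv (G xp) (xp - z) + gp - gz <= e ->
  hatf f A b beta lam xp + gp - e + dotv (mu - lam) (A *m xp - b)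
    - dotv (mu - lam) (mu - lam) / (2 * beta) <= hatf f A b beta mu z + gz.
Proof.
move=> cf b0 hg he.
have [hd hG] := hg xp.
set c := beta / 2 * dotv (A *m (z - xp)) (A *m (z - xp)).
have hb := @deriv_bound R n (hatf f A b beta lam) (G xp) xp (z - xp)
   (hatf f A b beta lam z - hatf f A b beta lam xp) c hd (hG _)
   (fun t ht => hatf_seg f A b beta lam xp z t cf ht).
have hy := young beta (mu - lam) (A *m (z - xp)) b0.
have ez : A *m z - b = (A *m xp - b) + A *m (z - xp) by rewrite mulmxBr; apply/matrixP => i j; rewrite !mxE; ring.
have hmu : hatf f A b beta mu z = hatf f A b beta lam z + dotv (mu - lam) (A *m z - b).
  by rewrite /hatf dotvBl; ring.
rewrite hmu ez.
have hd2 := dotvDr (A *m xp - b) (A *m (z - xp)) (mu - lam).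
have e3 : dotv (G xp) (xp - z) = - dotv (G xp) (z - xp) by rewrite -dotvNr opprB.
rewrite e3 in he.
rewrite /c in hb.
lra.
Qed.
Lemma summable0 {R : realType} (u : nat -> R) (C : R) : (forall k, 0 <= u k) ->
  (forall N, \sum_(0 <= k < N) u k <= C) -> u @ \oo --> 0.
Proof.
move=> u0 uC; apply: cvg_series_cvg_0; apply: nondecreasing_is_cvgn.
  apply/nondecreasing_seqP => N; rewrite !seriesEnat /= big_nat_recr //= lerDl //.
by exists C => _ [N _ <-]; rewrite seriesEnat /=; exact: uC.
Qed.

Lemma partial_bound {R : realType} (eta : nat -> R) : (forall k, 0 <= eta k) ->
  cvg ((\sum_(1 <= i < N) eta i) @[N --> \oo]) ->
  exists S, forall N, \sum_(1 <= i < N) eta i <= S.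
Proof.
move=> e0 ec; exists (limn (fun N => \sum_(1 <= i < N) eta i)) => N.
apply: (nondecreasing_cvgn_le _ ec).
apply/nondecreasing_seqP => M; case: M => [|M]; first by rewrite !big_geq.
by rewrite [X in _ <= X]big_nat_recr //= lerDl.
Qed.

Lemma q1lem {R : realType} (beta X : R) : 0 < beta ->
  beta * (beta * X) / (2 * beta) = beta / 2 * X.
Proof. by move=> b0; field; lra. Qed.

Lemma q3lem {R : realType} (beta X Y Z : R) : 0 < beta ->
  X / (2 * beta) - (X + beta * Y + (beta * Y + beta * (beta * Z))) / (2 * beta)
  = - Y - beta / 2 * Z.
Proof. by move=> b0; field; lra. Qed.

Lemma dot_expand {R : realType} {k : nat} (a r : 'cV[R]_k) (beta : R) :
  dotv (a + beta *: r) (a + beta *: r)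
  = dotv a a + beta * dotv a r + (beta * dotv a r + beta * (beta * dotv r r)).
Proof. by rewrite dotvDl !dotvDr !dotvZl !dotvZr (dotvC r a). Qed.

Lemma mul_half {R : realType} (beta q : R) : 0 < beta -> q = 2 / beta * (beta / 2 * q).
Proof. by move=> b0; field; lra. Qed.

Lemma hatfE {R : realType} {m n : nat} (f : 'cV[R]_n -> R) (A : 'M[R]_(m, n)) b beta
  (mu l : 'cV[R]_m) z :
  hatf f A b beta mu z = hatf f A b beta l z + dotv (mu - l) (A *m z - b).
Proof. by rewrite /hatf dotvBl; ring. Qed.

Theorem theorem1 (R : realType) (m n : nat)
  (A : 'M[R]_(m, n)) (b : 'cV[R]_m)
  (f : 'cV[R]_n -> R) (gradf : 'cV[R]_n -> 'cV[R]_n)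
  (g : 'cV[R]_n -> \bar R) (beta : R)
  (Ghat : 'cV[R]_m -> 'cV[R]_n -> 'cV[R]_n)
  (lamstar : 'cV[R]_m)
  (x : nat -> 'cV[R]_n) (lam : nat -> 'cV[R]_m) (eta : nat -> R) :
  convex_fun f ->
  is_gradient f gradf ->
  lipschitz_map gradf ->
  convex_efun g -> proper_efun g -> lsc_efun g -> bounded_dom g ->
  0 < beta ->
  (* Ghat lam is the gradient of hatf(.; lam) *)
  (forall l, is_gradient (hatf f A b beta l) (Ghat l)) ->
  (* lamstar is an optimal solution of the dual problem *)
  (forall l, (dualf f g A b beta l <= dualf f g A b beta lamstar)%E) ->
  (* IAL framework *)
  (g (x 1%N) < +oo)%E ->
  (forall k, 0 <= eta k) ->
  cvg ((\sum_(1 <= i < N) eta i) @[N --> \oo]) ->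
  (forall k, (1 <= k)%N -> forall z,
     ((dotv (Ghat (lam k) (x k.+1)) (x k.+1 - z))%:E + g (x k.+1) - g z
       <= (eta k)%:E)%E) ->
  (forall k, (1 <= k)%N -> lam k.+1 = lam k + beta *: (A *m x k.+1 - b)) ->
  ((fun k => (dualf f g A b beta lamstar - dualf f g A b beta (lam k))%E)
     @ \oo --> 0%E) /\
  ((fun k => enorm (A *m x k.+1 - b)) @ \oo --> 0).
Proof.
move=> cf _ _ _ [gnm [z0 gz0]] _ _ b0 hG hopt _ e0 ecvg hIAL hlam.
set d := dualf f g A b beta.
have gfin : forall k, (1 <= k)%N -> g (x k.+1) \is a fin_num.
  move=> k k1; have := hIAL k k1 z0.
  have := gnm (x k.+1); have := gnm z0.
  case Ez: (g z0) gz0 => [s| |] //; case E: (g (x k.+1)) => [r| |] //.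
pose gp k := fine (g (x k.+1)).
have hreal : forall k, (1 <= k)%N -> forall z gz, g z = gz%:E ->
    dotv (Ghat (lam k) (x k.+1)) (x k.+1 - z) + gp k - gz <= eta k.
  move=> k k1 z gz Ez; have := hIAL k k1 z.
  by rewrite Ez -[g (x k.+1)](fineK (gfin k k1)) -EFinD lee_fin.
have hlow : forall k, (1 <= k)%N -> forall mu,
    ((hatf f A b beta (lam k) (x k.+1) + gp k - eta k
      + dotv (mu - lam k) (A *m x k.+1 - b)
      - dotv (mu - lam k) (mu - lam k) / (2 * beta))%:E <= d mu)%E.
  move=> k k1 mu; apply: le_ereal_inf_tmp => _ [z _ <-]; rewrite /augL.
  case Ez: (g z) => [gz| |].
  - rewrite -EFinD lee_fin.
    exact: (step_real f A b beta (lam k) mu (Ghat (lam k)) (x k.+1) z (gp k) gz (eta k) cf b0 (hG (lam k)) (hreal k k1 z gz Ez)).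
  - by rewrite addey // leey.
  - by have := gnm z; rewrite Ez.
have hup : forall k, (1 <= k)%N -> forall mu,
    (d mu <= (hatf f A b beta mu (x k.+1) + gp k)%:E)%E.
  move=> k k1 mu; apply: ereal_inf_lbound; exists (x k.+1) => //.
  by rewrite /augL /gp [RHS]EFinD fineK // gfin.
have dfin : forall mu, d mu \is a fin_num.
  move=> mu; rewrite fin_numElt; apply/andP; split.
    exact: lt_le_trans (ltNyr _) (hlow 1%N isT mu).
  exact: le_lt_trans (hup 1%N isT mu) (ltry _).
pose D mu := fine (d mu).
have dE : forall mu, d mu = (D mu)%:E by move=> mu; rewrite /D fineK.
have hlowR : forall k, (1 <= k)%N -> forall mu,
    hatf f A b beta (lam k) (x k.+1) + gp k - eta k
      + dotv (mu - lam k) (A *m x k.+1 - b)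
      - dotv (mu - lam k) (mu - lam k) / (2 * beta) <= D mu.
  by move=> k k1 mu; rewrite -lee_fin -dE; exact: hlow.
have hupR : forall k, (1 <= k)%N -> forall mu,
    D mu <= hatf f A b beta mu (x k.+1) + gp k.
  by move=> k k1 mu; rewrite -lee_fin -dE; exact: hup.
have hoptR : forall l, D l <= D lamstar.
  by move=> l; rewrite -lee_fin -!dE; exact: hopt.
pose delta k := D lamstar - D (lam k).
pose zz k := dotv (lam k - lamstar) (lam k - lamstar) / (2 * beta).
have delta0 : forall k, 0 <= delta k by move=> k; rewrite /delta subr_ge0.
have zz0 : forall k, 0 <= zz k.
  by move=> k; rewrite /zz divr_ge0 ?dotv_ge0 // mulr_ge0 // ltW.
have step1 : forall k, (1 <= k)%N -> delta k.+1 <= zz k - zz k.+1 + eta k.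
  move=> k k1.
  set r := A *m x k.+1 - b.
  have h1 := hupR k k1 lamstar.
  have h2 := hlowR k k1 (lam k.+1).
  have el : lam k.+1 - lam k = beta *: r by rewrite hlam // addrC addKr.
  rewrite el in h2.
  rewrite (hatfE f A b beta lamstar (lam k)) -/r in h1.
  have q1 : dotv (beta *: r) (beta *: r) / (2 * beta) = beta / 2 * dotv r r.
    by rewrite dotvZl dotvZr q1lem.
  have q2 : dotv (beta *: r) r = beta * dotv r r by rewrite dotvZl.
  have q3 : zz k - zz k.+1 = - dotv (lam k - lamstar) r - beta / 2 * dotv r r.
    set a := lam k - lamstar.
    have ea : lam k.+1 - lamstar = a + beta *: r by rewrite hlam // /a addrAC.
    by rewrite /zz ea dot_expand q3lem.
  have q4 : dotv (lamstar - lam k) r = - dotv (lam k - lamstar) r.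
    by rewrite -dotvNl opprB.
  rewrite /delta.
  lra.
have step2 : forall k, (1 <= k)%N ->
    beta / 2 * dotv (A *m x k.+1 - b) (A *m x k.+1 - b) <= delta k - delta k.+1 + eta k.
  move=> k k1.
  set r := A *m x k.+1 - b.
  have h1 := hupR k k1 (lam k).
  have h2 := hlowR k k1 (lam k.+1).
  have el : lam k.+1 - lam k = beta *: r by rewrite hlam // addrC addKr.
  rewrite el in h2.
  have q1 : dotv (beta *: r) (beta *: r) / (2 * beta) = beta / 2 * dotv r r.
    by rewrite dotvZl dotvZr q1lem.
  have q2 : dotv (beta *: r) r = beta * dotv r r by rewrite dotvZl.
  rewrite /delta.
  lra.
have [S hS] := partial_bound eta e0 ecvg.
have tel : forall N, \sum_(0 <= k < N) delta (k + 2)%N <=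
    zz 1%N - zz N.+1 + \sum_(1 <= i < N.+1) eta i.
  elim => [|N IH]; first by rewrite !big_geq // subrr add0r.
  rewrite big_nat_recr // [X in _ <= _ + X]big_nat_recr //= addn2.
  have := step1 N.+1 isT; lra.
have eshift : forall N, \sum_(0 <= k < N) eta (k + 1)%N = \sum_(1 <= i < N.+1) eta i.
  elim => [|N IH]; first by rewrite !big_geq.
  by rewrite big_nat_recr // [RHS]big_nat_recr //= IH addn1.
have hdelta : delta @ \oo --> 0.
  rewrite -(cvg_shiftn 2).
  apply: (@summable0 R (fun k => delta (k + 2)%N) (zz 1%N + S)) => // N.
  have := tel N; have := zz0 N.+1; have := hS N.+1; lra.
have heta : eta @ \oo --> 0.
  rewrite -(cvg_shiftn 1).
  apply: (@summable0 R (fun k => eta (k + 1)%N) S) => // N.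
  by rewrite eshift.
split.
  have -> : (fun k => (d lamstar - d (lam k))%E) = fun k => (delta k)%:E.
    by apply: funext => k; rewrite !dE -EFinB.
  apply: cvg_EFin => //=; first by near=> k.
have hh : (fun k => 2 / beta * (delta k + eta k)) @ \oo --> 0.
  have -> : (0:R) = 2 / beta * (0 + 0) by rewrite addr0 mulr0.
  apply: cvgM; [exact: cvg_cst | exact: cvgD].
have hq : (fun k => dotv (A *m x k.+1 - b) (A *m x k.+1 - b)) @ \oo --> 0.
  apply: (squeeze_cvgr _ (cvg_cst 0) hh).
  near=> k.
  have k1 : (1 <= k)%N by near: k; exact: nbhs_infty_ge.
  have := step2 k k1; have := delta0 k.+1; have := dotv_ge0 (A *m x k.+1 - b).
  rewrite /=.
  set q := dotv _ _ => hq0 hd1 hs.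
  apply/andP; split => //.
  rewrite [X in X <= _](mul_half beta q b0); apply: ler_wpM2l.
    by rewrite divr_ge0 // ltW.
  lra.
have := cvg_comp _ _ hq (@sqrt_continuous R 0).
rewrite sqrtr0; exact.
Unshelve. all: by end_near.
Qed.
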